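(* Let $G$ be a finite solvable group such that every maximal subgroup of $G$ is either $2$-nilpotent or has prime index in $G$. Then ${\bf O}_{2',2,2',2}(G)=G$.
   Context: All groups are finite. A group is $2$-nilpotent if it has a normal Hall $2'$-subgroup. A maximal subgroup means a maximal proper subgroup. For a prime $p$, ${\bf O}_{p'}(G)$ is the largest normal $p'$-subgroup and ${\bf O}_p(G)$ the largest normal $p$-subgroup of $G$; the upper $p'p$-series is defined recursively: ${\bf O}_{p',p}(G)$ is the full preimage in $G$ of ${\bf O}_p(G/{\bf O}_{p'}(G))$, ${\bf O}_{p',p,p'}(G)$ is the full preimage of ${\bf O}_{p'}(G/{\bf O}_{p',p}(G))$, ${\bf O}_{p',p,p',p}(G)$ the full preimage of ${\bf O}_p(G/{\bf O}_{p',p,p'}(G))$, and so on. Here $p=2$. *)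

(* Defs.v *)
From mathcomp Require Import all_boot all_fingroup all_solvable.
Set Implicit Arguments. Unset Strict Implicit. Unset Printing Implicit Defensive.
Local Open Scope group_scope.

Definition two_nilpotent (gT : finGroupType) (H : {group gT}) : Prop :=
  exists K : {group gT}, (2^').-Hall(H) K /\ K <| H.

(* Main.v *)
Require Import Defs.
From mathcomp Require Import all_boot all_fingroup all_solvable.
Local Open Scope group_scope.

Module Helpers.
Set Implicit Arguments. Unset Strict Implicit. Unset Printing Implicit Defensive.
Section Gen.
Variable gT : finGroupType.
Implicit Types G L Q N : {group gT}.

Lemma pseries_rcons_sub pis (pi : nat_pred) G :
  pseries pis G \subset pseries (rcons pis pi) G.
Proof. by rewrite -cats1 pseries_sub_catl. Qed.

Lemma step pis (pi : nat_pred) G L : L <| G -> pi.-nat #|L : pseries pis G| ->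
  L \subset pseries (rcons pis pi) G.
Proof.
move=> nsLG piL.
have nsSG := pseries_normal pis G.
have nSL : L \subset 'N(pseries pis G).
  exact: subset_trans (normal_sub nsLG) (normal_norm nsSG).
rewrite -(quotientSGK nSL (pseries_rcons_sub pis pi G)) quotient_pseries.
apply: pcore_max; last exact: quotient_normal.
by rewrite /pgroup card_quotient.
Qed.

Lemma final pis (pi : nat_pred) G : pi.-nat #|G : pseries pis G| ->
  pseries (rcons pis pi) G = G.
Proof.
move=> piG; apply/eqP; rewrite eqEsubset pseries_sub /=.
exact: step (normal_refl G) piG.
Qed.

Lemma index_pnat pis (pi : nat_pred) G :
  pi.-nat #|pseries (rcons pis pi) G : pseries pis G|.
Proof.
rewrite -card_quotient ?pseries_norm2 // quotient_pseries.
exact: pcore_pgroup.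
Qed.

Lemma crit G Q L : Q <| G -> L <| G -> Q \subset L -> 2.-group Q ->
  2^'.-nat #|L : Q| -> 2.-nat #|G : L| -> 'O_{2^', 2, 2^', 2}(G) = G.
Proof.
move=> nsQG nsLG sQL pQ pLQ pGL.
have s2 : Q \subset pseries [:: 2^'; (2 : nat_pred)] G.
  exact: (@step [:: 2^'] (2 : nat_pred) G Q nsQG (pnat_dvd (dvdn_indexg _ _) pQ)).
have s3 : L \subset pseries [:: 2^'; (2 : nat_pred); 2^'] G.
  exact: (@step [:: 2^'; (2 : nat_pred)] 2^' G L nsLG (pnat_dvd (indexgS _ s2) pLQ)).
exact: (@final [:: 2^'; (2 : nat_pred); 2^'] (2 : nat_pred) G) (pnat_dvd (indexgS _ s3) pGL).
Qed.

Lemma two_central G N : G \subset 'N(N) -> #|N| = 2 -> N \subset 'C(G).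
Proof.
move=> nNG /eqP /cards2P [x [y [nxy defN]]].
have N1 : (1 : gT) \in N by exact: group1.
have uniq1 : forall w z, w \in N -> z \in N -> w != 1 -> z != 1 -> w = z.
  move=> w z; rewrite defN in N1 *.
  case/set2P: N1 => e1; move/set2P=> [->|->] /set2P [->|->] //;
    rewrite -?e1 ?eqxx //.
apply/centsP=> z Nz g Gg.
case: (eqVneq z 1) => [->|ntz]; first exact: commute_sym (commute1 _).
apply/commgP/conjg_fixP; apply: uniq1 => //; last by rewrite conjg_eq1.
by rewrite memJ_norm ?(subsetP nNG).
Qed.

Lemma hyp_quo G N : N <| G ->
  (forall M : {group gT}, maximal M G -> two_nilpotent M \/ prime #|G : M|) ->
  forall Mb : {group coset_of N}, maximal Mb (G / N) ->
    two_nilpotent Mb \/ prime #|G / N : Mb|.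
Proof.
move=> nsNG hyp Mb maxMb.
pose M := (coset N @*^-1 Mb)%G.
have nsNM : N <| M := normal_cosetpre Mb.
have defMb : M / N = Mb := cosetpreK Mb.
have maxM : maximal M G by rewrite -(quotient_maximal nsNM nsNG) defMb.
have sMG : M \subset G := proper_sub (maxgroupp maxM).
case: (hyp M maxM) => [[K [hallK nsKM]] | prM].
  left; exists (K / N)%G; rewrite -defMb; split.
    apply: quotient_pHall => //.
    exact: subset_trans (pHall_sub hallK) (normal_norm nsNM).
  exact: quotient_normal.
right; rewrite -defMb index_quotient_eq //.
  exact: subset_trans (subsetIr _ _) (normal_sub nsNM).
exact: normal_norm.
Qed.
End Gen.
Lemma pop_pgroup (rT : finGroupType) (X : {group rT}) : 'O_2^'(X) = 1 ->
  2.-group (pseries [:: 2^'; (2 : nat_pred)] X).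
Proof. by move=> X1; rewrite pseries_pop2 // pcore_pgroup. Qed.
End Helpers.
Import Helpers.

Theorem theoremB (gT : finGroupType) (G : {group gT}) :
  solvable G ->
  (forall M : {group gT}, maximal M G -> two_nilpotent M \/ prime #|G : M|) ->
  'O_{2^', 2, 2^', 2}(G) = G.
Proof.
move: gT G.
suff IH : forall n gT (G : {group gT}), #|G| <= n -> solvable G ->
  (forall M : {group gT}, maximal M G -> two_nilpotent M \/ prime #|G : M|) ->
  'O_{2^', 2, 2^', 2}(G) = G by move=> gT G; apply: (IH #|G|).
elim=> [|n IHn] gT G leGn solG hyp; first by rewrite leqNgt cardG_gt0 in leGn.
case: (eqVneq 'O_2^'(G) 1) => [O1 | ntO]; last first.
  have nsQG := pcore_normal 2^' G.
  have ltQ : #|G / 'O_2^'(G)| <= n.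
    by rewrite -ltnS (leq_trans (ltn_quotient ntO (pcore_sub _ _))).
  have IHQ := IHn _ _ ltQ (quotient_sol _ solG) (hyp_quo nsQG hyp).
  rewrite pseries_pop ?trivg_pcore_quotient // in IHQ.
  have e := quotient_pseries_cat [:: 2^'] [:: (2 : nat_pred); 2^'; (2 : nat_pred)] G.
  rewrite pseries1 /= IHQ in e.
  apply: (quotient_inj _ nsQG e).
  apply: normalS (pseries_sub _ _) nsQG.
  by have := pseries_sub_catl [:: 2^'] [:: (2 : nat_pred); 2^'; (2 : nat_pred)] G; rewrite pseries1.
case: (eqsVneq G 1) => [G1 | ntG].
  by apply/eqP; rewrite eqEsubset pseries_sub /= G1 sub1G.
have [N minN sNG] := minnormal_exists ntG (normG G).
have [nNG ntN abN] := minnormal_solvable minN sNG solG.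
have nsNG : N <| G by rewrite /normal sNG nNG.
have prp : prime (pdiv #|N|) by rewrite pdiv_prime // cardG_gt1.
have pN := abelem_pgroup abN.
have p2 : pdiv #|N| = 2.
  apply/eqP; apply/negPn/negP => np2.
  have : N \subset 'O_2^'(G).
    apply: pcore_max nsNG; apply: sub_pgroup pN => q; rewrite !inE => /eqP ->.
    by [].
  by rewrite O1 subG1 (negPf ntN).
have pN2 : 2.-group N by rewrite -p2.
have ltN : #|G / N| <= n.
  by rewrite -ltnS (leq_trans (ltn_quotient ntN sNG)).
have IHN := IHn _ _ ltN (quotient_sol _ solG) (hyp_quo nsNG hyp).
pose A := (coset N @*^-1 'O_2^'(G / N))%G.
have nsAG : A <| G by rewrite -(quotientGK nsNG) cosetpre_normal pcore_normal.
have nsNA : N <| A := normal_cosetpre _.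
have sAG := normal_sub nsAG.
have solA : solvable A := solvableS sAG solG.
have [H hallH] := Hall_exists 2^' solA.
have hallN : 2.-Hall(A) N.
  rewrite /pHall normal_sub //= pN2 /= -card_quotient ?normal_norm //.
  by rewrite cosetpreK; apply: pcore_pgroup.
have defA : N ><| H = A by apply/(sdprod_normal_p'HallP nsNA hallH).
have mulNH : N * H = A := sdprodW defA.
have frat : A * 'N_G(H) = G := Hall_Frattini_arg solA nsAG hallH.
have sHA := pHall_sub hallH.
have sHG := subset_trans sHA sAG.
case: (maximal_exists (subsetIl G 'N(H))) => [eqNG | [M maxM sNM]].
  have nsHG : H <| G by rewrite /normal sHG -eqNG subsetIr.
  have H1 : H :=: 1.
    apply/trivgP; rewrite -O1; apply: pcore_max nsHG.
    exact: pHall_pgroup hallH.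
  have defA0 : A :=: N by rewrite -mulNH H1 mulg1.
  have Ab1 : 'O_2^'(G / N) = 1.
    by rewrite -(cosetpreK 'O_2^'(G / N)) -/(gval A) defA0 trivg_quotient.
  pose Q := (coset N @*^-1 (pseries [:: 2^'; (2 : nat_pred)] (G / N)))%G.
  pose L := (coset N @*^-1 (pseries [:: 2^'; (2 : nat_pred); 2^'] (G / N)))%G.
  apply: (@crit _ G Q L).
  - by rewrite -(quotientGK nsNG) cosetpre_normal pseries_normal.
  - by rewrite -(quotientGK nsNG) cosetpre_normal pseries_normal.
  - by rewrite cosetpreSK (pseries_rcons_sub [:: 2^'; (2 : nat_pred)] 2^').
  - rewrite /pgroup card_morphpre ?sub_im_coset // ker_coset pnatM.
    apply/andP; split; first exact: pN2.
    exact: pop_pgroup Ab1.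
  - rewrite index_morphpre ?sub_im_coset //.
    exact: (index_pnat [:: 2^'; (2 : nat_pred)] 2^').
  have -> : #|G : L| = #|coset N @*^-1 (G / N) : L| by rewrite quotientGK.
  rewrite index_morphpre ?sub_im_coset // -{1}IHN.
  exact: (index_pnat [:: 2^'; (2 : nat_pred); 2^'] (2 : nat_pred)).
have prM := maxgroupp maxM.
have sMG := proper_sub prM.
have sHNH : H \subset 'N_G(H) by rewrite subsetI sHG normG.
have sHM := subset_trans sHNH sNM.
have nsubNM : ~~ (N \subset M).
  apply/negP=> sNM'; move/properP: prM => [_ [x Gx nMx]]; case/negP: nMx.
  apply: (subsetP _ x Gx); rewrite -frat -mulNH mul_subG // mul_subG //.
have defG : N * M = G.
  apply/eqP; rewrite eqEsubset mul_subG //=.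
  rewrite -{1}frat -mulNH -mulgA mulgSS // mul_subG //.
have nNM : M \subset 'N(N) := subset_trans sMG nNG.
case: (hyp M maxM) => [[K [hallK nsKM]] | prIM].
  case/and3P: hallK => sKM pK pMK.
  have nNK : K \subset 'N(N) := subset_trans sKM nNM.
  pose L := (N <*> K)%G.
  have defL : L :=: N * K := norm_joinEr nNK.
  have sLG : L \subset G by rewrite join_subG sNG (subset_trans sKM sMG).
  have nsLG : L <| G.
    rewrite /normal sLG -defG mul_subG //.
      exact: subset_trans (joing_subl N K) (normG _).
    by rewrite normsY // normal_norm.
  have defLM : L * M = G.
    apply/eqP; rewrite eqEsubset mul_subG //= -{1}defG mulgSS ?joing_subl //.
  apply: (@crit _ G N L nsNG nsLG (joing_subl N K) pN2).
    rewrite defL indexMg; exact: pnat_dvd (dvdn_indexg _ _) pK.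
  rewrite -defLM indexMg.
  rewrite -pnatNK; exact: pnat_dvd (indexgS _ (joing_subr N K)) pMK.
exfalso.
have cNN : abelian N := abelem_abelian abN.
have nsNMG : (N :&: M)%G <| G.
  rewrite /normal /= (subset_trans (subsetIl _ _) sNG) /= -defG mul_subG //.
    exact: sub_abelian_norm cNN (subsetIl _ _).
  by rewrite normsI // normG.
have tiNM : N :&: M = 1.
  apply/eqP; apply/negPn/negP => ntNM.
  have := (mingroupP minN).2 (N :&: M)%G.
  rewrite ntNM (normal_norm nsNMG) => /(_ isT (subsetIl _ _)) eqNM.
  by case/negP: nsubNM; rewrite -eqNM subsetIr.
have cardG : #|G| = (#|N| * #|M|)%N by rewrite -defG TI_cardMg.
have iGM : #|G : M| = #|N|.
  apply/eqP; rewrite -(eqn_pmul2l (cardG_gt0 M)) (Lagrange sMG) cardG mulnC //.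
rewrite iGM in prIM.
have N2 : #|N| = 2.
  apply/eqP; apply: (pnatPpi pN2); rewrite mem_primes prIM cardG_gt0 dvdnn //.
have cNG := two_central nNG N2.
case/negP: nsubNM; apply: subset_trans sNM.
rewrite subsetI sNG cents_norm // (subset_trans cNG) // centS //.
Qed.
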